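(* Let $n\ge 1$, let $k_1,\dots,k_m$ be positive integers and let $R(t)\in\mathbb{C}[[t]]$. Then $$\psi_n\left(\frac{R(t)}{(1-t^{k_1})(1-t^{k_2})\cdots(1-t^{k_m})} \right)= \frac{\psi_n\big(R(t)\,Q_n(t^{k_1})Q_n(t^{k_2})\cdots Q_n(t^{k_m})\big)}{(1-z^{k_1})(1-z^{k_2})\cdots(1-z^{k_m})},$$ where $Q_n(t)=1+t+t^2+\cdots+t^{n-1}$.
   Context: For a positive integer $n$, $\psi_n:\mathbb{C}[[t]]\to\mathbb{C}[[z,t]]$ is the linear map (extended termwise to power series) defined by $\psi_n(t^m)=z^it^j$ where $i\ge 0$ and $0\le j<n$ are the unique integers with $m=ni-j$. Fractions $1/(1-t^k)$, $1/(1-z^k)$ are expanded as geometric power series. *)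

(* Defs.v *)
From HB Require Import structures.
From mathcomp Require Import all_boot all_order all_algebra.
From mathcomp Require Import complex.
From mathcomp Require Import Rstruct.
Set Implicit Arguments. Unset Strict Implicit. Unset Printing Implicit Defensive.
Import Order.TTheory GRing.Theory Num.Theory.
Local Open Scope ring_scope.

Definition CC : Type := (Rdefinitions.R)[i].

Definition series := nat -> CC.
(* A formal power series in C[[z,t]]: F i j = coefficient of z^i t^j. *)
Definition bseries := nat -> nat -> CC.

Definition smul (f g : series) : series :=
  fun m => \sum_(i < m.+1) f i * g (m - i)%N.

Definition sone : series := fun m => if m == 0%N then 1 else 0.

Definition sprod (fs : seq series) : series := foldr smul sone fs.

(* substitution t |-> t^k (k > 0): (subst_pow k f)(t) = f(t^k) *)
Definition subst_pow (k : nat) (f : series) : series :=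
  fun m => if (k %| m)%N then f (m %/ k)%N else 0.

Definition geom1 : series := fun _ => 1.

(* 1/(1 - t^k), expanded as a geometric series *)
Definition inv1mXk (k : nat) : series := subst_pow k geom1.

Definition Qn (n : nat) : series := fun m => if (m < n)%N then 1 else 0.

(* psi_n(t^m) = z^i t^j where m = n i - j, i >= 0, 0 <= j < n;
   extended termwise: coefficient of z^i t^j in psi_n f is f (n i - j)
   when 0 <= j < n and j <= n i, and 0 otherwise. *)
Definition psi (n : nat) (f : series) : bseries :=
  fun i j => if (j < n)%N && (j <= n * i)%N then f (n * i - j)%N else 0.

(* multiplication of a series in C[[z,t]] by a series g(z) in z alone *)
Definition zmul (g : series) (F : bseries) : bseries :=
  fun i j => \sum_(l < i.+1) g l * F (i - l)%N j.

(* Main.v *)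
Require Import Defs.
From mathcomp Require Import all_boot all_order all_algebra.
From mathcomp Require Import complex Rstruct zify.
From Stdlib Require Import FunctionalExtensionality.
Set Implicit Arguments. Unset Strict Implicit.
Import GRing.Theory.
Local Open Scope ring_scope.

Definition agree (N : nat) (p : {poly (Rdefinitions.R)[i]}) (f : series) :=
  forall i, (i < N)%N -> p`_i = f i.

Definition trunc (N : nat) (f : series) : {poly (Rdefinitions.R)[i]} := \poly_(i < N) f i.

Lemma agree_trunc N f : agree N (trunc N f) f.
Proof. by move=> i hi; rewrite coef_poly hi. Qed.
Arguments agree_trunc : clear implicits.

Lemma agree_mul N p q f g : agree N p f -> agree N q g -> agree N (p * q) (smul f g).
Proof.
move=> hp hq i hi; rewrite coefM /smul; apply: eq_bigr => k _.
have := ltn_ord k => hk0.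
have hk : (k < N)%N by lia.
have hk' : (i - k < N)%N by lia.
by rewrite hp // hq.
Qed.

Lemma agree_one N : agree N 1 sone.
Proof. by move=> i _; rewrite coef1 /sone; case: (i == 0%N). Qed.
Arguments agree_one : clear implicits.

Lemma agree_subst N p f k : (0 < k)%N -> agree N p f ->
  agree N (p \Po 'X^k) (subst_pow k f).
Proof.
move=> hk hp i hi; rewrite coef_comp_poly_Xn // /subst_pow.
case: ifP => // _; apply: hp; exact: leq_ltn_trans (leq_div _ _) hi.
Qed.

Lemma agree_eq N p f g : agree N p f -> agree N p g -> forall i, (i < N)%N -> f i = g i.
Proof. by move=> hf hg i hi; rewrite -hf // hg. Qed.

Lemma smulC f g : smul f g = smul g f.
Proof.
apply: functional_extensionality => m.
have h1 := agree_mul (agree_trunc m.+1 f) (agree_trunc m.+1 g).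
have h2 := agree_mul (agree_trunc m.+1 g) (agree_trunc m.+1 f).
rewrite mulrC in h2.
exact: (agree_eq h1 h2).
Qed.

Lemma smulA f g h : smul f (smul g h) = smul (smul f g) h.
Proof.
apply: functional_extensionality => m.
have h1 := agree_mul (agree_trunc m.+1 f)
   (agree_mul (agree_trunc m.+1 g) (agree_trunc m.+1 h)).
have h2 := agree_mul (agree_mul (agree_trunc m.+1 f) (agree_trunc m.+1 g))
   (agree_trunc m.+1 h).
rewrite -mulrA in h2.
exact: (agree_eq h1 h2).
Qed.

Lemma smul1 f : smul sone f = f.
Proof.
apply: functional_extensionality => m.
have h1 := agree_mul (agree_one m.+1) (agree_trunc m.+1 f).
rewrite mul1r in h1.
exact: (agree_eq h1 (agree_trunc m.+1 f)).
Qed.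

Lemma subst_mul k f g : (0 < k)%N ->
  subst_pow k (smul f g) = smul (subst_pow k f) (subst_pow k g).
Proof.
move=> hk; apply: functional_extensionality => m.
have h1 := agree_subst hk (agree_mul (agree_trunc m.+1 f) (agree_trunc m.+1 g)).
have h2 := agree_mul (agree_subst hk (agree_trunc m.+1 f))
   (agree_subst hk (agree_trunc m.+1 g)).
rewrite -comp_polyM in h2.
exact: (agree_eq h1 h2).
Qed.

Lemma subst_one k : (0 < k)%N -> subst_pow k sone = sone.
Proof.
move=> hk; apply: functional_extensionality => m.
have h1 := agree_subst hk (agree_one m.+1).
have h2 := agree_one m.+1.
rewrite comp_polyC in h1.
exact: (agree_eq h1 h2).
Qed.

Lemma subst_comm k n f : (0 < k)%N -> (0 < n)%N ->
  subst_pow k (subst_pow n f) = subst_pow n (subst_pow k f).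
Proof.
move=> hk hn; apply: functional_extensionality => m.
have h1 := agree_subst hk (agree_subst hn (agree_trunc m.+1 f)).
have h2 := agree_subst hn (agree_subst hk (agree_trunc m.+1 f)).
rewrite -!comp_polyA !comp_Xn_poly -!exprM mulnC in h1.
rewrite -!comp_polyA !comp_Xn_poly -!exprM in h2.
exact: (agree_eq h1 h2).
Qed.

Lemma geom_id n : (0 < n)%N -> geom1 = smul (Qn n) (subst_pow n geom1).
Proof.
move=> hn; apply: functional_extensionality => m.
rewrite /smul /geom1 /Qn /subst_pow.
have hm : (m %% n < m.+1)%N by rewrite ltnS leq_mod.
rewrite (bigD1 (Ordinal hm)) //= big1 ?addr0.
  rewrite ltn_pmod // ifT ?mulr1 //.
  have e := divn_eq m n.
  apply/dvdnP; exists (m %/ n)%N; lia.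
move=> i /eqP hi.
case: ifP => h1; last by rewrite mul0r.
case: ifP => h2; last by rewrite mulr0.
exfalso; apply: hi; apply: val_inj => /=.
move/dvdnP: h2 => [q hq].
have e := divn_eq m n.
have hi' := ltn_ord i.
rewrite -(modn_small h1).
have -> : (i : nat) = (m - q * n)%N by lia.
rewrite -(modnMDl q (m - q*n)%N).
congr (_ %% _)%N; lia.
Qed.

Lemma inv_id n k : (0 < n)%N -> (0 < k)%N ->
  inv1mXk k = smul (subst_pow k (Qn n)) (subst_pow n (inv1mXk k)).
Proof.
move=> hn hk; rewrite /inv1mXk -subst_comm // -subst_mul //.
by rewrite -geom_id.
Qed.

Lemma sum_div n (h : nat -> nat -> CC) M : (0 < n)%N ->
  \sum_(b < M.+1) (if (n %| b)%N then h (b %/ n)%N b else 0) =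
  \sum_(l < (M %/ n).+1) h l (n * l)%N.
Proof.
move=> hn; elim: M => [|M IH].
  by rewrite div0n !big_ord_recr !big_ord0 /= dvdn0 div0n muln0.
rewrite big_ord_recr /= IH divnS //.
case: ifP => hd /=.
  rewrite [in RHS]big_ord_recr /=; congr (_ + _).
  have e := divnK hd.
  have e2 := divnS M hn. rewrite hd /= in e2.
  rewrite hd; congr (h _ _).
  by rewrite -e2 mulnC e.
by rewrite addr0.
Qed.

Lemma sum_cond n (h : nat -> CC) M K : (0 < n)%N -> (M %/ n <= K)%N ->
  \sum_(l < K.+1) (if (n * l <= M)%N then h l else 0) =
  \sum_(l < (M %/ n).+1) h l.
Proof.
move=> hn hK.
rewrite (big_ord_widen K.+1 h) // [in RHS]big_mkcond /=.
apply: eq_bigr => l _.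
by rewrite ltnS leq_divRL // mulnC.
Qed.

Lemma psi_shift n S G : (0 < n)%N ->
  psi n (smul S (subst_pow n G)) = zmul G (psi n S).
Proof.
move=> hn; rewrite smulC.
apply: functional_extensionality => i; apply: functional_extensionality => j.
rewrite /psi /zmul.
case: ifP => hc.
  move/andP: hc => [hj hji].
  set M := (n * i - j)%N.
  rewrite /smul.
  transitivity (\sum_(b < M.+1)
     (if (n %| b)%N then (fun l b => G l * S (M - b)%N) (b %/ n)%N b else 0)).
    apply: eq_bigr => b _; rewrite /subst_pow /=.
    by case: ifP => _ //; rewrite mul0r.
  rewrite (sum_div (fun l b => G l * S (M - b)%N) M hn).
  have hMi : (M %/ n <= i)%N.
    have := leq_div2r n (leq_subr j (n * i)).
    by rewrite mulKn.
  rewrite -(sum_cond (fun l => G l * S (M - n * l)%N) hn hMi).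
  apply: eq_bigr => l _.
  have hl := ltn_ord l.
  have hnl : (n * l <= n * i)%N by apply: leq_mul => //; rewrite -ltnS.
  rewrite mulnBr hj /=.
  case: ifP => h1; case: ifP => h2 //.
  - by congr (_ * S _); rewrite /M; lia.
  - exfalso; move: h1 h2; rewrite /M; lia.
  - exfalso; move: h1 h2; rewrite /M; lia.
  - by rewrite mulr0.
rewrite big1 // => l _.
have hnl : (n * (i - l) <= n * i)%N by apply: leq_mul => //; exact: leq_subr.
rewrite ifF ?mulr0 //.
apply/negP => /andP [a b]; move/negP: hc; apply; rewrite a /=.
exact: leq_trans b hnl.
Qed.

Lemma smulACA a b c d :
  smul (smul a b) (smul c d) = smul (smul a c) (smul b d).
Proof.
by rewrite -!smulA (smulA b c d) (smulC b c) -smulA.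
Qed.

Lemma key n ks : (0 < n)%N -> all (fun k => 0 < k)%N ks ->
  sprod [seq inv1mXk k | k <- ks] =
  smul (sprod [seq subst_pow k (Qn n) | k <- ks])
       (subst_pow n (sprod [seq inv1mXk k | k <- ks])).
Proof.
move=> hn; elim: ks => [|k ks IH] /=.
  by move=> _; rewrite subst_one // smul1.
move=> /andP [hk hks].
rewrite subst_mul // {1}IH // {1}(inv_id hn hk).
by rewrite smulACA.
Qed.

Theorem lemma4 (n : nat) (ks : seq nat) (R : series) :
  (0 < n)%N -> all (fun k => 0 < k)%N ks ->
  psi n (smul R (sprod [seq inv1mXk k | k <- ks])) =
  zmul (sprod [seq inv1mXk k | k <- ks])
       (psi n (smul R (sprod [seq subst_pow k (Qn n) | k <- ks]))).
Proof.
move=> hn hks.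
by rewrite {1}(key hn hks) smulA psi_shift.
Qed.
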